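(* Let $F\in[0,1]$ and $0\le p\le F$, and let $F'_{\min}(p,F)=\min\{F'_{00}(\rho_1\otimes\rho_2):\rho_1,\rho_2\in S_{p,F}\}$. Then $$F'_{\min}(p,F)\ge\frac{p(2F-p)}{1+(1-p)^2}.$$
   Context: For qubit registers $(R,T)$, $|\Psi_{ij}\rangle_{RT}=(I_R\otimes(X^iZ^j)_T)\tfrac1{\sqrt2}(|00\rangle+|11\rangle)$. $S_{p,F}$ is the set of two-qubit density operators $\rho$ with $\rho=p|\Psi_{00}\rangle\langle\Psi_{00}|+(1-p)\sigma$ for some density operator $\sigma$ and $\langle\Psi_{00}|\rho|\Psi_{00}\rangle=F$. For $\rho_1$ on $(A_1,B_1)$ and $\rho_2$ on $(A_2,B_2)$: $p'_{ij}(\rho_1\otimes\rho_2)=\mathrm{Tr}[|\Psi_{ij}\rangle\langle\Psi_{ij}|_{A_1A_2}\rho_1\otimes\rho_2]$ is the probability of Bell-state measurement outcome $ij$ on $(A_1,A_2)$, and $F'_{ij}(\rho_1\otimes\rho_2)=\frac1{p'_{ij}}\mathrm{Tr}[|\Psi_{ij}\rangle\langle\Psi_{ij}|_{B_1B_2}|\Psi_{ij}\rangle\langle\Psi_{ij}|_{A_1A_2}\rho_1\otimes\rho_2]$ is the postselected end-to-end fidelity. *)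

(* Defs.v *)
(* complex numbers are algC (an algebraically closed num field,
   whose partial order `0 <= z` means z is a nonnegative real). *)
From mathcomp Require Import all_boot all_order all_algebra all_field.
Set Implicit Arguments. Unset Strict Implicit. Unset Printing Implicit Defensive.
Import Order.TTheory GRing.Theory Num.Theory.
Local Open Scope ring_scope.

Notation C := algC.
Notation qubit := 'I_2.

(* Two-qubit computational basis |r t> (register R = first/most significant
   factor) is indexed by 'I_4 via r t |-> 2 r + t. *)
Definition ix (r t : qubit) : 'I_4 := inord (2 * r + t).
Definition hi (k : 'I_4) : qubit := inord (k %/ 2).
Definition lo (k : 'I_4) : qubit := inord (k %% 2).

Definition kron2 (A B : 'M[C]_2) : 'M[C]_4 :=
  \matrix_(i, j) (A (hi i) (hi j) * B (lo i) (lo j)).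

Definition PauliX : 'M[C]_2 := \matrix_(i, j) (if i != j then 1 else 0).
Definition PauliZ : 'M[C]_2 :=
  \matrix_(i, j) (if i == j then (if i == 0 :> qubit then 1 else -1) else 0).

Definition adjmx m n (A : 'M[C]_(m, n)) : 'M[C]_(n, m) := (map_mx Num.conj A)^T.

Definition phiplus : 'cV[C]_4 :=
  (sqrtC 2)^-1 *: \col_k (if hi k == lo k then 1 else 0).

Definition bell (i j : qubit) : 'cV[C]_4 :=
  kron2 1%:M (PauliX ^+ i *m PauliZ ^+ j) *m phiplus.

Definition proj (v : 'cV[C]_4) : 'M[C]_4 := v *m adjmx v.

Definition is_density (rho : 'M[C]_4) : Prop :=
  (forall v : 'cV[C]_4, 0 <= (adjmx v *m rho *m v) 0 0) /\ \tr rho = 1.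

Definition fid00 (rho : 'M[C]_4) : C :=
  (adjmx (bell 0 0) *m rho *m bell 0 0) 0 0.

Definition S_pF (p F : C) (rho : 'M[C]_4) : Prop :=
  is_density rho /\
  (exists sigma, is_density sigma /\ rho = p *: proj (bell 0 0) + (1 - p) *: sigma) /\
  fid00 rho = F.

(* Four-qubit system (A1,B1,A2,B2); basis index (((a1,b1),a2),b2). *)
Definition q4 := (qubit * qubit * qubit * qubit)%type.
Definition gA1 (x : q4) : qubit := x.1.1.1.
Definition gB1 (x : q4) : qubit := x.1.1.2.
Definition gA2 (x : q4) : qubit := x.1.2.
Definition gB2 (x : q4) : qubit := x.2.

Definition tens4 (rho1 rho2 : 'M[C]_4) (x y : q4) : C :=
  rho1 (ix (gA1 x) (gB1 x)) (ix (gA1 y) (gB1 y)) *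
  rho2 (ix (gA2 x) (gB2 x)) (ix (gA2 y) (gB2 y)).

Definition projA (i j : qubit) (x y : q4) : C :=
  proj (bell i j) (ix (gA1 x) (gA2 x)) (ix (gA1 y) (gA2 y)) *
  ((gB1 x == gB1 y) && (gB2 x == gB2 y))%:R.

Definition projAB (i j : qubit) (x y : q4) : C :=
  proj (bell i j) (ix (gB1 x) (gB2 x)) (ix (gB1 y) (gB2 y)) *
  proj (bell i j) (ix (gA1 x) (gA2 x)) (ix (gA1 y) (gA2 y)).

Definition tr4 (P M : q4 -> q4 -> C) : C := \sum_(x : q4) \sum_(y : q4) P x y * M y x.

Definition pprime (i j : qubit) (rho1 rho2 : 'M[C]_4) : C :=
  tr4 (projA i j) (tens4 rho1 rho2).

Definition Fprime (i j : qubit) (rho1 rho2 : 'M[C]_4) : C :=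
  tr4 (projAB i j) (tens4 rho1 rho2) / pprime i j rho1 rho2.

(* Main.v *)
Require Import Defs.
From mathcomp Require Import all_boot all_order all_algebra all_field.
From mathcomp Require Import ring.
Import Order.TTheory GRing.Theory Num.Theory.
Set Implicit Arguments. Unset Strict Implicit. Unset Printing Implicit Defensive.
Local Open Scope ring_scope.

Definition qf n (A : 'M[C]_n) (v : 'cV[C]_n) : C := (adjmx v *m A *m v) 0 0.

Lemma qfE n (A : 'M[C]_n) v :
  qf A v = \sum_k \sum_l (v k 0)^* * A k l * v l 0.
Proof.
rewrite /qf mxE; rewrite exchange_big /=; apply: eq_bigr => l _.
rewrite mxE mulr_suml; apply: eq_bigr => k _.
by rewrite /adjmx !mxE.
Qed.

Lemma sum_delta n (f : 'I_n -> C) i : \sum_k (k == i)%:R * f k = f i.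
Proof.
rewrite (bigD1 i) //= eqxx mul1r big1 ?addr0 // => k /negPf ->; by rewrite mul0r.
Qed.

Lemma sum_delta2 n (f : 'I_n -> C) i j d :
  \sum_k ((k == i)%:R + d * (k == j)%:R) * f k = f i + d * f j.
Proof.
under eq_bigr => k _ do rewrite mulrDl -mulrA.
by rewrite big_split /= -mulr_sumr !sum_delta.
Qed.

Lemma qf_e n (A : 'M[C]_n) i j c :
  qf A (delta_mx i 0 + c *: delta_mx j 0) =
  A i i + c * A i j + c^* * A j i + c^* * c * A j j.
Proof.
rewrite qfE.
transitivity (\sum_k ((k == i)%:R + c^* * (k == j)%:R) * \sum_l ((l == i)%:R + c * (l == j)%:R) * A k l).
  apply: eq_bigr => k _; rewrite mulr_sumr; apply: eq_bigr => l _; rewrite !mxE !eqxx !andbT rmorphD rmorphM /=.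
  by rewrite !rmorph_nat; ring.
rewrite sum_delta2 !sum_delta2; ring.
Qed.

Definition psd n (A : 'M[C]_n) := forall v, 0 <= qf A v.

Lemma psd_real n (A : 'M[C]_n) v : psd A -> (qf A v)^* = qf A v.
Proof. by move=> h; apply: geC0_conj. Qed.

Lemma psd_diag n (A : 'M[C]_n) k : psd A -> (A k k)^* = A k k.
Proof.
move=> h; have := psd_real (delta_mx k 0 + 0 *: delta_mx k 0) h.
have -> : qf A (delta_mx k 0 + 0 *: delta_mx k 0) = A k k.
  by rewrite qf_e rmorph0; ring.
done.
Qed.

Lemma psd_herm n (A : 'M[C]_n) : psd A -> forall i j, A j i = (A i j)^*.
Proof.
move=> hA i j.
have E1 := psd_real (delta_mx i 0 + 1 *: delta_mx j 0) hA.
have E2 := psd_real (delta_mx i 0 + 'i *: delta_mx j 0) hA.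
rewrite !qf_e !rmorphD !rmorphM /= !rmorph1 conjCi in E1 E2.
rewrite !rmorphN /= conjCi opprK in E2.
rewrite (psd_diag i hA) (psd_diag j hA) in E1 E2.
match type of E1 with ?L1 = ?R1 => match type of E2 with ?L2 = ?R2 =>
  have key : 'i * 2 * ((A i j)^* - A j i) = ('i * L1 - L2) - ('i * R1 - R2) by ring end end.
rewrite E1 E2 subrr in key.
by move/eqP: key; rewrite !mulf_eq0 (negPf (neq0Ci _)) pnatr_eq0 /= subr_eq0 => /eqP.
Qed.


Section Schur.
Local Open Scope sesquilinear_scope.

Lemma schur n (A B : 'M[C]_n) : psd A -> psd B ->
  0 <= \sum_k \sum_l A k l * B k l.
Proof.
move=> hA hB.
have hN : B \is normalmx.
  apply: hermitian_normalmx; apply/is_hermitianmxP; rewrite expr0 scale1r.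
  by apply/matrixP => k l; rewrite !mxE; exact: psd_herm.
set P := spectralmx B; set d := spectral_diag B.
have hU : P \is unitarymx by apply: spectral_unitarymx.
have eB : B = P^t* *m diag_mx d *m P.
  by rewrite {1}(orthomx_spectralP hN) invmx_unitary.
have eBkl k l : B k l = \sum_m (P m k)^* * d 0 m * P m l.
  by rewrite {1}eB mxE; apply: eq_bigr => m _; rewrite mul_mx_diag !mxE.
have ed m : d 0 m = \sum_k \sum_l (P m k) * B k l * (P m l)^*.
  have : P *m B *m P^t* = diag_mx d.
    rewrite eB !mulmxA (unitarymxP hU) mul1mx -mulmxA (unitarymxP hU) mulmx1 //.
  move/matrixP/(_ m m); rewrite !mxE eqxx mulr1n => <-.
  rewrite exchange_big /=; apply: eq_bigr => l _; rewrite mxE mulr_suml.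
  by apply: eq_bigr => k _; rewrite !mxE.
have dpos m : 0 <= d 0 m.
  rewrite ed; have := hB (col m (P^t*)); rewrite qfE.
  congr (0 <= _); apply: eq_bigr => k _; apply: eq_bigr => l _; rewrite !mxE conjCK //.
have -> : \sum_k \sum_l A k l * B k l = \sum_m d 0 m * \sum_k \sum_l (P m k)^* * A k l * P m l.
  under eq_bigr => k _ do (under eq_bigr => l _ do rewrite eBkl mulr_sumr; rewrite exchange_big /=).
  rewrite exchange_big /=; apply: eq_bigr => m _; rewrite mulr_sumr; apply: eq_bigr => k _.
  rewrite mulr_sumr; apply: eq_bigr => l _; ring.
apply: sumr_ge0 => m _; apply: mulr_ge0 => //.
have := hA (row m P)^T; rewrite qfE.
congr (0 <= _); apply: eq_bigr => k _; apply: eq_bigr => l _; rewrite !mxE //.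
Qed.

End Schur.
Definition q0 : 'I_2 := @Ordinal 2 0 isT.
Definition q1 : 'I_2 := @Ordinal 2 1 isT.
Definition k0 : 'I_4 := @Ordinal 4 0 isT.
Definition k1 : 'I_4 := @Ordinal 4 1 isT.
Definition k2 : 'I_4 := @Ordinal 4 2 isT.
Definition k3 : 'I_4 := @Ordinal 4 3 isT.

Lemma sum2 (F : 'I_2 -> C) : \sum_i F i = F q0 + F q1.
Proof. by rewrite !big_ord_recl big_ord0 addr0; congr (F _ + F _); apply: val_inj. Qed.

Lemma sum4 (F : 'I_4 -> C) : \sum_i F i = F k0 + F k1 + F k2 + F k3.
Proof.
rewrite !big_ord_recl big_ord0 addr0 !addrA.
by congr (F _ + F _ + F _ + F _); apply: val_inj.
Qed.

Lemma sum_pair (I J : finType) (G : I * J -> C) :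
  \sum_p G p = \sum_i \sum_j G (i, j).
Proof. by rewrite (pair_bigA _ (fun i j => G (i, j))); apply: eq_bigr => -[]. Qed.

Lemma sum_q4 (G : q4 -> C) : \sum_x G x =
  \sum_(a1 < 2) \sum_(b1 < 2) \sum_(a2 < 2) \sum_(b2 < 2) G (a1, b1, a2, b2).
Proof. by rewrite !sum_pair. Qed.


Lemma ix00 : ix q0 q0 = k0. Proof. by apply: val_inj; rewrite /= inordK. Qed.
Lemma ix01 : ix q0 q1 = k1. Proof. by apply: val_inj; rewrite /= inordK. Qed.
Lemma ix10 : ix q1 q0 = k2. Proof. by apply: val_inj; rewrite /= inordK. Qed.
Lemma ix11 : ix q1 q1 = k3. Proof. by apply: val_inj; rewrite /= inordK. Qed.
Lemma zero_q : (0 : 'I_2) = q0. Proof. by apply: val_inj. Qed.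
Lemma q0q1 : (q0 == q1) = false. Proof. by []. Qed.
Lemma q1q0 : (q1 == q0) = false. Proof. by []. Qed.

Lemma ord4P (P : 'I_4 -> Prop) : P k0 -> P k1 -> P k2 -> P k3 -> forall i, P i.
Proof.
move=> h0 h1 h2 h3 [[|[|[|[|i]]]] Hi].
- by rewrite (_ : Ordinal Hi = k0) //; apply: val_inj.
- by rewrite (_ : Ordinal Hi = k1) //; apply: val_inj.
- by rewrite (_ : Ordinal Hi = k2) //; apply: val_inj.
- by rewrite (_ : Ordinal Hi = k3) //; apply: val_inj.
- by [].
Qed.

Lemma hi0 : hi k0 = q0. Proof. by apply: val_inj; rewrite /= inordK. Qed.
Lemma hi1 : hi k1 = q0. Proof. by apply: val_inj; rewrite /= inordK. Qed.
Lemma hi2 : hi k2 = q1. Proof. by apply: val_inj; rewrite /= inordK. Qed.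
Lemma hi3 : hi k3 = q1. Proof. by apply: val_inj; rewrite /= inordK. Qed.
Lemma lo0 : lo k0 = q0. Proof. by apply: val_inj; rewrite /= inordK. Qed.
Lemma lo1 : lo k1 = q1. Proof. by apply: val_inj; rewrite /= inordK. Qed.
Lemma lo2 : lo k2 = q0. Proof. by apply: val_inj; rewrite /= inordK. Qed.
Lemma lo3 : lo k3 = q1. Proof. by apply: val_inj; rewrite /= inordK. Qed.
Definition hiloE := (hi0, hi1, hi2, hi3, lo0, lo1, lo2, lo3).

Lemma kron11 : kron2 1%:M 1%:M = 1%:M.
Proof.
apply/matrixP => i j; rewrite !mxE -natrM; congr (_%:R).
by elim/ord4P: i; elim/ord4P: j; rewrite !hiloE.
Qed.

Lemma bell00 : bell 0 0 = phiplus.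
Proof.
rewrite /bell; have -> : nat_of_ord (0 : 'I_2) = 0%N by [].
by rewrite !expr0 mulmx1 kron11 mul1mx.
Qed.

Lemma projE (v : 'cV[C]_4) k l : proj v k l = v k 0 * (v l 0)^*.
Proof. by rewrite /proj mxE big_ord1 /adjmx !mxE. Qed.

Lemma s2 : (sqrtC 2)^-1 * ((sqrtC 2)^-1)^* = 2^-1 :> C.
Proof.
rewrite geC0_conj ?invr_ge0 ?sqrtC_ge0 ?ler0n // -invfM -expr2 sqrtCK //.
Qed.

Definition ph (k : 'I_4) : C := if hi k == lo k then 1 else 0.

Lemma PhiE k l : proj (bell 0 0) k l = ph k * ph l / 2.
Proof.
rewrite bell00 projE /phiplus !mxE rmorphM /= -s2 /ph.
by case: ifP => _; case: ifP => _; rewrite ?rmorph0 ?rmorph1; ring.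
Qed.

Lemma ph0 : ph k0 = 1. Proof. by rewrite /ph !hiloE. Qed.
Lemma ph1 : ph k1 = 0. Proof. by rewrite /ph !hiloE. Qed.
Lemma ph2 : ph k2 = 0. Proof. by rewrite /ph !hiloE. Qed.
Lemma ph3 : ph k3 = 1. Proof. by rewrite /ph !hiloE. Qed.

Lemma sum_q4' (G : q4 -> C) : \sum_x G x =
  G (q0, q0, q0, q0) + G (q0, q0, q0, q1) + G (q0, q0, q1, q0) + G (q0, q0, q1, q1) + G (q0, q1, q0, q0) + G (q0, q1, q0, q1) + G (q0, q1, q1, q0) + G (q0, q1, q1, q1) + G (q1, q0, q0, q0) + G (q1, q0, q0, q1) + G (q1, q0, q1, q0) + G (q1, q0, q1, q1) + G (q1, q1, q0, q0) + G (q1, q1, q0, q1) + G (q1, q1, q1, q0) + G (q1, q1, q1, q1).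
Proof. by rewrite sum_q4 !sum2 !addrA. Qed.

Definition S n (A B : 'M[C]_n) := \sum_k \sum_l A k l * B k l.
Definition ixE := (ix00, ix01, ix10, ix11).
Definition phE := (ph0, ph1, ph2, ph3).

Lemma N_eq r s : tr4 (projAB 0 0) (tens4 r s) = S r s / 4.
Proof.
rewrite /tr4 sum_q4'.
rewrite !sum_q4'.
rewrite /projAB /tens4 /gA1 /gA2 /gB1 /gB2 /=.
rewrite zero_q !ixE.
rewrite !PhiE !phE /S !sum4.
by field.
Qed.

Definition Xr (r : 'M[C]_4) : 'M[C]_2 :=
  \matrix_(a, b) (r (ix a q0) (ix b q0) + r (ix a q1) (ix b q1)).

Lemma D_eq r s : pprime 0 0 r s = S (Xr r) (Xr s) / 2.
Proof.
rewrite /pprime /tr4 sum_q4' !sum_q4' /projA /tens4 /gA1 /gA2 /gB1 /gB2 /=.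
rewrite zero_q !ixE !PhiE !phE ?eqxx ?q0q1 ?q1q0 /=.
rewrite /S !sum2 !mxE !ixE.
by field.
Qed.

Lemma sq_term (a x b : C) : ((sqrtC 2)^-1 * a)^* * x * ((sqrtC 2)^-1 * b) = a^* * x * b / 2.
Proof.
rewrite rmorphM /= -s2.
set u := (sqrtC 2)^-1; set v := u^*; ring.
Qed.

Definition fidE (r : 'M[C]_4) := (r k0 k0 + r k0 k3 + r k3 k0 + r k3 k3) / 2.

Lemma fid_eq r : fid00 r = fidE r.
Proof.
rewrite /fid00 -/(qf r (bell 0 0)) qfE bell00 !sum4.
have pE k : phiplus k 0 = (sqrtC 2)^-1 * ph k by rewrite /phiplus !mxE.
rewrite !pE !sq_term !phE /fidE !rmorph0 !rmorph1.
by field.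
Qed.

Lemma Xr_psd r : psd r -> psd (Xr r).
Proof.
move=> h w.
pose v (b : 'I_2) : 'cV[C]_4 := \col_k (w (hi k) 0 * (if lo k == b then 1 else 0)).
have -> : qf (Xr r) w = qf r (v q0) + qf r (v q1).
  rewrite !qfE !sum2 !sum4 !mxE !hiloE !ixE /=.
  rewrite ?eqxx ?q0q1 ?q1q0 /= !rmorphM /= ?rmorph0 ?rmorph1.
  ring.
by apply: addr_ge0; apply: h.
Qed.

Lemma Xr_psdC r : psd r -> r k0 k0 + r k1 k1 + r k2 k2 + r k3 k3 = 1 ->
  psd (1%:M - Xr r).
Proof.
move=> h ht w.
pose u : 'cV[C]_2 := \col_a (if a == q0 then (w q1 0)^* else - (w q0 0)^*).
have -> : qf (1%:M - Xr r) w = qf (Xr r) u.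
  rewrite -ht.
  rewrite !qfE !sum2 !mxE !ixE /=.
  rewrite ?eqxx ?q0q1 ?q1q0 /= ?rmorphN /= ?conjCK.
  ring.
exact: Xr_psd.
Qed.

Lemma PhiM : proj (bell 0 0) = \matrix_(k, l) (ph k * ph l / 2).
Proof. by apply/matrixP => k l; rewrite PhiE mxE. Qed.

Lemma tr4E (r : 'M[C]_4) : \tr r = r k0 k0 + r k1 k1 + r k2 k2 + r k3 k3.
Proof. by rewrite /mxtrace sum4. Qed.

Theorem proposition4 (p F : algC) :
  0 <= F -> F <= 1 -> 0 <= p -> p <= F ->
  forall rho1 rho2 : 'M[algC]_4,
    S_pF p F rho1 -> S_pF p F rho2 ->
    p * (2 * F - p) / (1 + (1 - p) ^+ 2) <= Fprime 0 0 rho1 rho2.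
Proof.
move=> F0 F1 p0 pF r1 r2 [_ [[s1 [[Ps1 Ts1] e1]] f1]] [_ [[s2 [[Ps2 Ts2] e2]] f2]].
have hs1 : psd s1 by [].
have hs2 : psd s2 by [].
rewrite tr4E in Ts1; rewrite tr4E in Ts2.
rewrite /Fprime N_eq D_eq.
have EN : S r1 r2 = p * (fid00 r1 + fid00 r2 - p) + (1 - p) ^+ 2 * S s1 s2.
  rewrite !fid_eq e1 e2 /fidE /S !sum4 PhiM !mxE !phE; by field.
have ED : S (Xr r1) (Xr r2) = p ^+ 2 / 2 + p * (1 - p) * ((s1 k0 k0 + s1 k1 k1 + s1 k2 k2 + s1 k3 k3) + (s2 k0 k0 + s2 k1 k1 + s2 k2 k2 + s2 k3 k3)) / 2 + (1 - p) ^+ 2 * S (Xr s1) (Xr s2).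
  rewrite e1 e2 /S !sum2 PhiM !mxE !ixE !phE; by field.
have Eu : S (Xr s1) (1%:M - Xr s2) = (s1 k0 k0 + s1 k1 k1 + s1 k2 k2 + s1 k3 k3) - S (Xr s1) (Xr s2).
  rewrite /S !sum2 !mxE !ixE /= ?eqxx ?q0q1 ?q1q0 /=; ring.
rewrite Ts1 in Eu.
rewrite Ts1 Ts2 in ED; rewrite f1 f2 in EN.
have Sp : 0 <= S s1 s2 by apply: schur.
have up : 0 <= S (Xr s1) (1%:M - Xr s2) by apply: schur; [apply: Xr_psd | apply: Xr_psdC].
have tp : 0 <= S (Xr s1) (Xr s2) by apply: schur; apply: Xr_psd.
rewrite EN ED; rewrite Eu in up.
move: Sp up tp; set Sg := S s1 s2; set t := S (Xr s1) (Xr s2) => Sp up tp.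
clear -F0 F1 p0 pF Sp up tp.
have q0' : 0 <= 1 - p by rewrite subr_ge0; apply: le_trans F1.
have a0 : 0 <= (1 - p) ^+ 2 by apply: exprn_ge0.
move: a0; set a := (1 - p) ^+ 2 => a0.
have c0 : 0 <= 2 * F - p.
  rewrite (_ : 2 * F - p = F + (F - p)); last by ring.
  by apply: addr_ge0 => //; rewrite subr_ge0.
have two0 : 0 <= 2 :> C by rewrite ler0n.
have four0 : 0 <= 4 :> C by rewrite ler0n.
have a1 : 0 < 1 + a by apply: lt_le_trans (ltr01) _; rewrite lerDl.
have L0 : 0 <= p * (2 * F - p) / (1 + a) by apply: divr_ge0; [apply: mulr_ge0 | apply: ltW].
have Dge : 0 <= (p ^+ 2 / 2 + p * (1 - p) * (1 + 1) / 2 + a * t) / 2.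
  apply: divr_ge0 => //; apply: addr_ge0; [apply: addr_ge0|apply: mulr_ge0] => //.
    by apply: divr_ge0 => //; apply: exprn_ge0.
  by apply: divr_ge0 => //; apply: mulr_ge0; [apply: mulr_ge0|apply: addr_ge0].
have Nge : 0 <= (p * (F + F - p) + a * Sg) / 4.
  apply: divr_ge0 => //; apply: addr_ge0; apply: mulr_ge0 => //.
  by rewrite (_ : F + F - p = 2 * F - p) //; ring.
have [p00|pn0] := eqVneq p 0.
  by rewrite {1}p00 !mul0r; apply: divr_ge0.
have pp : 0 < p by rewrite lt_def pn0.
have Dp : 0 < (p ^+ 2 / 2 + p * (1 - p) * (1 + 1) / 2 + a * t) / 2.
  apply: divr_gt0; last by rewrite ltr0n.
  apply: lt_le_trans (_ : 0 < p ^+ 2 / 2) _.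
    by apply: divr_gt0; [apply: exprn_gt0|rewrite ltr0n].
  rewrite -addrA lerDl; apply: addr_ge0; last by apply: mulr_ge0.
  by apply: divr_ge0 => //; apply: mulr_ge0; [apply: mulr_ge0|apply: addr_ge0].
move: Dp Dge; set D := (_ / 2 + _ / 2 + a * t) / 2 => Dp Dge.
rewrite -subr_ge0.
have -> : (p * (F + F - p) + a * Sg) / 4 / D - p * (2 * F - p) / (1 + a)
   = (a * Sg / 4 + p * (2 * F - p) / (1 + a) * a * (1 - t) / 2) / D.
  rewrite /D /a; field.
  apply/andP; split.
    rewrite (_ : p ^+ 2 + p * (1 - p) * 2 + (1 - p) ^+ 2 * t * 2 = 4 * D); last by rewrite /D /a; field.
    by rewrite mulf_neq0 ?pnatr_eq0 // gt_eqF.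
  by rewrite -/a gt_eqF.
apply: divr_ge0 => //; apply: addr_ge0.
  by apply: divr_ge0 => //; apply: mulr_ge0.
by apply: divr_ge0 => //; apply: mulr_ge0 => //; apply: mulr_ge0.
Qed.
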